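(* Let $\mathbf{w}\in\Sigma^\omega$ be an infinite word with appearance constant $\mathbf{A}_\mathbf{w}<\infty$, and let $S\subseteq\mathbb{N}$ be the greedy string attractor for $\mathbf{w}$. Then for all $n\ge0$, $S\cap[0..n-1]$ is a string attractor for $\mathbf{w}[0..n-1]$, and its size is $O(\mathbf{A}_\mathbf{w}\log n)$ (with an absolute implied constant).
   Context: $\Sigma$ is a finite alphabet; words are indexed from $0$ and $[a..b]=\{a,\ldots,b\}$. The appearance constant $\mathbf{A}_\mathbf{w}$ is the least constant $C$ such that for every $m\ge1$, every length-$m$ factor of $\mathbf{w}$ has an occurrence in the prefix of length at most $Cm$. For a set $T\subseteq\mathbb{N}$ and $j\ge0$, say $T$ is a string attractor for $\mathbf{w}[0..j]$ if every nonempty factor of $\mathbf{w}[0..j]$ has an occurrence $\mathbf{w}[p..q]$ with $q\le j$ and $p\le t\le q$ for some $t\in T$. The greedy string attractor of $\mathbf{w}$ is $S=\bigcup_{m}S_m$ where $S_0=\emptyset$ and, for $m\ge0$, $S_{m+1}=S_m\cup\{j\}$ with $j$ the smallest integer such that $S_m$ is not a string attractor for $\mathbf{w}[0..j]$ (and $S_{m+1}=S_m$ if no such $j$ exists). *)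

(* Defs.v *)
From Stdlib Require Import Reals Lra Lia Arith List ClassicalEpsilon.
Open Scope R_scope.

Definition finite_alphabet (Sigma : Type) : Prop :=
  exists l : list Sigma, forall a : Sigma, In a l.

(* T is a string attractor for the prefix of length n of w, i.e. for
   w[0..n-1] (so "string attractor for w[0..j]" is the case n = j+1):
   every nonempty factor w[p..q] (q <= n-1) has an occurrence w[p'..q']
   with q' <= n-1 and some t in T with p' <= t <= q'. *)
Definition string_attractor {Sigma : Type} (w : nat -> Sigma)
    (T : nat -> Prop) (n : nat) : Prop :=
  forall p q : nat, (p <= q)%nat -> (q < n)%nat ->
    exists p' : nat,
      (p' + (q - p) < n)%nat /\
      (forall k : nat, (k <= q - p)%nat -> w (p' + k)%nat = w (p + k)%nat) /\
      exists t : nat, T t /\ (p' <= t)%nat /\ (t <= p' + (q - p))%nat.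

Definition appearance_bound {Sigma : Type} (w : nat -> Sigma) (C : R) : Prop :=
  forall m p : nat, (1 <= m)%nat ->
    exists p' : nat,
      INR (p' + m) <= C * INR m /\
      (forall k : nat, (k < m)%nat -> w (p' + k)%nat = w (p + k)%nat).

(* A is the appearance constant A_w (the least admissible bound);
   its existence expresses A_w < infinity. *)
Definition appearance_constant {Sigma : Type} (w : nat -> Sigma) (A : R) : Prop :=
  appearance_bound w A /\ (forall C : R, appearance_bound w C -> A <= C).

Definition bad {Sigma : Type} (w : nat -> Sigma) (T : nat -> Prop) (j : nat) : Prop :=
  ~ string_attractor w T (S j).

(* Smallest j such that T is not a string attractor for w[0..j]
   (meaningful only when such j exists). *)
Definition least_bad {Sigma : Type} (w : nat -> Sigma) (T : nat -> Prop) : nat :=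
  epsilon (inhabits 0%nat)
    (fun j => bad w T j /\ forall i : nat, (i < j)%nat -> ~ bad w T i).

Definition greedy_step {Sigma : Type} (w : nat -> Sigma) (T : nat -> Prop)
    : nat -> Prop :=
  fun x => T x \/ ((exists j : nat, bad w T j) /\ x = least_bad w T).

Fixpoint greedy_stage {Sigma : Type} (w : nat -> Sigma) (m : nat) : nat -> Prop :=
  match m with
  | O => fun _ => False
  | S m' => greedy_step w (greedy_stage w m')
  end.

Definition greedy_attractor {Sigma : Type} (w : nat -> Sigma) : nat -> Prop :=
  fun x => exists m : nat, greedy_stage w m x.

Definition pbool (P : Prop) : bool :=
  if excluded_middle_informative P then true else false.

Definition card_below (X : nat -> Prop) (n : nat) : nat :=
  length (filter (fun x => pbool (X x)) (seq 0 n)).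

(* Main.v *)
Require Import Defs.
From Stdlib Require Import Reals Lra Lia Arith List Classical ClassicalEpsilon.
Open Scope R_scope.

Lemma myln_le x y : 0 < x -> x <= y -> ln x <= ln y.
Proof.
  intros Hx Hxy. destruct (Rle_lt_or_eq_dec x y Hxy) as [H|H].
  - left; apply ln_increasing; auto.
  - subst; right; reflexivity.
Qed.

Lemma sa_mono {Sigma} (w : nat -> Sigma) (T T' : nat -> Prop) n :
  (forall t, T t -> T' t) -> string_attractor w T n -> string_attractor w T' n.
Proof.
  intros HT H p q Hpq Hq. destruct (H p q Hpq Hq) as [p' [H1 [H2 [t [Ht [H3 H4]]]]]].
  exists p'. split; [|split]; auto. exists t; auto.
Qed.

Lemma bad_anti {Sigma} (w : nat -> Sigma) T T' j :
  (forall t, T t -> T' t) -> bad w T' j -> bad w T j.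
Proof. unfold bad; intros HT H1 H2; apply H1; eapply sa_mono; eauto. Qed.

Lemma least_exists (P : nat -> Prop) :
  (exists j, P j) -> exists j, P j /\ forall i, (i < j)%nat -> ~ P i.
Proof.
  intros [j Hj]. revert Hj. induction j as [j IH] using lt_wf_ind. intros Hj.
  destruct (classic (exists i, (i < j)%nat /\ P i)) as [[i [Hi Pi]]|Hn].
  - apply (IH i Hi Pi).
  - exists j; split; auto. intros i Hi Pi; apply Hn; eauto.
Qed.

Lemma least_bad_spec {Sigma} (w : nat -> Sigma) T : (exists j, bad w T j) ->
  bad w T (least_bad w T) /\ forall i, (i < least_bad w T)%nat -> ~ bad w T i.
Proof.
  intros H. unfold least_bad. apply epsilon_spec. apply least_exists. exact H.
Qed.

Lemma add_least {Sigma} (w : nat -> Sigma) (T T' : nat -> Prop) j :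
  (forall i, (i < j)%nat -> ~ bad w T i) ->
  (forall t, T t -> T' t) -> T' j ->
  forall i, (i <= j)%nat -> ~ bad w T' i.
Proof.
  intros Hmin HT Hj i Hi Hb.
  destruct (Nat.lt_ge_cases i j) as [Hlt|Hge].
  - apply (Hmin i Hlt). eapply bad_anti; eauto.
  - assert (i = j) by lia. subst i. apply Hb. intros p q Hpq Hq.
    destruct (Nat.lt_ge_cases q j) as [Hqj|Hqj].
    + destruct j as [|j']; [lia|].
      assert (HS : string_attractor w T (S j')).
      { apply NNPP. intro HH. apply (Hmin j'). lia. exact HH. }
      destruct (HS p q Hpq Hqj) as [p' [H1 [H2 [t [Ht [H3 H4]]]]]].
      exists p'. split; [lia|split; auto]. exists t; auto.
    + exists p. split; [lia|split; auto]. exists j. split; auto. lia.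
Qed.

Lemma bad_witness {Sigma} (w : nat -> Sigma) T j : bad w T j ->
  exists p q, (p <= q)%nat /\ (q <= j)%nat /\
   forall p', (p' + (q - p) <= j)%nat ->
     (forall k, (k <= q - p)%nat -> w (p'+k)%nat = w (p+k)%nat) ->
     forall t, T t -> (p' <= t)%nat -> (t <= p' + (q-p))%nat -> False.
Proof.
  intros Hb. apply NNPP. intro Hn. apply Hb. intros p q Hpq Hq.
  apply NNPP. intro Hn2. apply Hn. exists p, q. split; [auto|split; [lia|]].
  intros p' H1 H2 t Ht H3 H4. apply Hn2. exists p'. split; [lia|split; auto].
  exists t; auto.
Qed.

Lemma bad_gap {Sigma} (w : nat -> Sigma) A T j :
  appearance_bound w A ->
  bad w T j -> (forall i, (i < j)%nat -> ~ bad w T i) ->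
  exists p, (p <= j)%nat /\ INR (S j) <= A * INR (S j - p) /\
     forall t, T t -> (p <= t)%nat -> (t <= j)%nat -> False.
Proof.
  intros HA Hb Hmin.
  destruct (bad_witness w T j Hb) as [p [q [Hpq [Hqj Hno]]]].
  assert (Hearly : forall p', (p' + (q - p) < j)%nat ->
     (forall k, (k <= q - p)%nat -> w (p'+k)%nat = w (p+k)%nat) -> False).
  { intros p' Hp' Hm. destruct j as [|j']; [lia|].
    assert (HS : string_attractor w T (S j')).
    { apply NNPP. intro HH. apply (Hmin j'); [lia|exact HH]. }
    destruct (HS p' (p' + (q-p))%nat ltac:(lia) Hp') as [p'' [H1 [H2 [t [Ht [H3 H4]]]]]].
    apply (Hno p'' ltac:(lia)) with (t := t); auto; try lia.
    intros k Hk. assert (Hk' : (k <= p' + (q - p) - p')%nat) by lia.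
    rewrite (H2 k Hk'). apply Hm; lia. }
  assert (Hq : q = j).
  { destruct (Nat.lt_ge_cases q j) as [H|H]; [|lia]. exfalso.
    apply (Hearly p); [lia|auto]. }
  subst q.
  destruct (HA (j - p + 1)%nat p ltac:(lia)) as [p'' [Hle Hm]].
  assert (Hge : (j <= p'' + (j - p))%nat).
  { destruct (Nat.lt_ge_cases (p'' + (j-p)) j) as [H|H]; auto. exfalso.
    apply (Hearly p'' H). intros k Hk. apply Hm. lia. }
  exists p. split; [lia|split].
  - replace (S j - p)%nat with (j - p + 1)%nat by lia.
    eapply Rle_trans; [|exact Hle]. apply le_INR. lia.
  - intros t Ht H1 H2. apply (Hno p ltac:(lia) (fun k _ => eq_refl) t Ht); lia.
Qed.

Lemma stage_succ {Sigma} (w : nat -> Sigma) k x :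
  greedy_stage w (S k) x <-> greedy_stage w k x \/
    ((exists j, bad w (greedy_stage w k) j) /\ x = least_bad w (greedy_stage w k)).
Proof. split; intro H; exact H. Qed.

Lemma stage_mono {Sigma} (w : nat -> Sigma) k k' x :
  (k <= k')%nat -> greedy_stage w k x -> greedy_stage w k' x.
Proof.
  intros Hle; induction Hle; intro H; [exact H|apply stage_succ; left; auto].
Qed.

Lemma stage_inv {Sigma} (w : nat -> Sigma) k : forall t, greedy_stage w k t ->
  forall i, (i <= t)%nat -> ~ bad w (greedy_stage w k) i.
Proof.
  induction k as [|k IH]; intros t Ht i Hi.
  - simpl in Ht; contradiction.
  - apply stage_succ in Ht. destruct Ht as [Ht|[Hex Heq]].
    + intro Hb. apply (IH t Ht i Hi). eapply bad_anti; [|exact Hb].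
      intros x Hx; apply stage_succ; left; exact Hx.
    + destruct (least_bad_spec w _ Hex) as [_ Hmin]. subst t.
      eapply add_least; [exact Hmin| | |exact Hi].
      * intros x Hx; apply stage_succ; left; exact Hx.
      * apply stage_succ; right; auto.
Qed.

Lemma first_app {Sigma} (w : nat -> Sigma) m x : greedy_stage w m x ->
  exists k, ~ greedy_stage w k x /\ greedy_stage w (S k) x.
Proof.
  induction m as [|m IH]; intro H.
  - simpl in H; contradiction.
  - destruct (classic (greedy_stage w m x)) as [H'|H']; [apply IH, H'| exists m; auto].
Qed.

Lemma added {Sigma} (w : nat -> Sigma) k x : ~ greedy_stage w k x -> greedy_stage w (S k) x ->
  (exists j, bad w (greedy_stage w k) j) /\ x = least_bad w (greedy_stage w k).
Proof. intros H1 H2. apply stage_succ in H2. destruct H2 as [H2|H2]; [contradiction|exact H2]. Qed.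

Lemma A_ge1 {Sigma} (w : nat -> Sigma) A : appearance_bound w A -> 1 <= A.
Proof.
  intros HA. destruct (HA 1%nat 0%nat (le_n 1)) as [p' [H _]].
  assert (INR 1 <= INR (p'+1)) by (apply le_INR; lia). simpl in *. lra.
Qed.

Lemma gap_prop {Sigma} (w : nat -> Sigma) A : appearance_bound w A ->
  forall s x, greedy_attractor w s -> greedy_attractor w x -> (s < x)%nat ->
   INR (S x) + A * INR (S s) <= A * INR (S x).
Proof.
  intros HA s x [ms Hs] [mx Hx] Hsx.
  pose proof (A_ge1 w A HA) as HA1.
  destruct (first_app w mx x Hx) as [k [Hk1 Hk2]].
  destruct (added w k x Hk1 Hk2) as [Hex Heq].
  destruct (least_bad_spec w _ Hex) as [Hb Hmin]. rewrite <- Heq in Hb, Hmin.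
  destruct (classic (greedy_stage w k s)) as [Hsk|Hsk].
  - destruct (bad_gap w A _ x HA Hb Hmin) as [p [Hp [Hineq Hgap]]].
    assert (Hsp : (s < p)%nat).
    { destruct (Nat.lt_ge_cases s p); auto. exfalso; apply (Hgap s Hsk); lia. }
    rewrite minus_INR in Hineq by lia.
    assert (INR (S s) <= INR p) by (apply le_INR; lia).
    assert (A * INR (S s) <= A * INR p) by (apply Rmult_le_compat_l; lra).
    lra.
  - exfalso. destruct (first_app w ms s Hs) as [k' [Hk1' Hk2']].
    destruct (added w k' s Hk1' Hk2') as [Hex' Heq'].
    destruct (least_bad_spec w _ Hex') as [Hb' _]. rewrite <- Heq' in Hb'.
    destruct (Nat.lt_trichotomy k' k) as [Hlt|[Heqk|Hgt]].
    + apply Hsk. apply (stage_mono w (S k') k); [lia|exact Hk2'].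
    + subst k'. rewrite <- Heq in Heq'. lia.
    + apply (stage_inv w k' x (stage_mono w (S k) k' x ltac:(lia) Hk2) s ltac:(lia) Hb').
Qed.

Lemma pbool_true (P : Prop) : P -> pbool P = true.
Proof. unfold pbool; destruct (excluded_middle_informative P); tauto. Qed.
Lemma pbool_false (P : Prop) : ~ P -> pbool P = false.
Proof. unfold pbool; destruct (excluded_middle_informative P); tauto. Qed.

Lemma card_S X n : card_below X (S n) = (card_below X n + (if pbool (X n) then 1 else 0))%nat.
Proof.
  unfold card_below. rewrite seq_S, filter_app, length_app. simpl.
  destruct (pbool (X n)); simpl; lia.
Qed.

Lemma card_zero X n : (forall s, X s -> (s < n)%nat -> False) -> card_below X n = 0%nat.
Proof.
  induction n as [|n IH]; intro H; [reflexivity|].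
  rewrite card_S, pbool_false.
  - rewrite IH; [reflexivity|]. intros s Hs Hl; apply (H s Hs); lia.
  - intro Hn; apply (H n Hn); lia.
Qed.

Lemma count_bound (X : nat -> Prop) A : 1 <= A ->
  (forall s x, X s -> X x -> (s < x)%nat -> INR (S x) + A * INR (S s) <= A * INR (S x)) ->
  forall n r, 1 <= r -> (forall s, X s -> (s < n)%nat -> INR (S s) <= r) ->
  INR (card_below X n) <= 1 + A * ln r.
Proof.
  intros HA1 HP n. induction n as [|n IH]; intros r Hr Hb.
  - unfold card_below; simpl.
    assert (0 <= ln r) by (rewrite <- ln_1; apply myln_le; lra).
    assert (0 <= A * ln r) by (apply Rmult_le_pos; lra). lra.
  - assert (0 <= ln r) by (rewrite <- ln_1; apply myln_le; lra).
    assert (0 <= A * ln r) by (apply Rmult_le_pos; lra).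
    rewrite card_S. destruct (classic (X n)) as [Xn|Xn].
    + rewrite pbool_true by auto. rewrite plus_INR. simpl (INR 1).
      destruct (classic (exists s, X s /\ (s < n)%nat)) as [[s0 [Xs0 Hs0]]|Hno].
      * set (r' := INR (S n) * (1 - / A)).
        assert (Hr' : forall s, X s -> (s < n)%nat -> INR (S s) <= r').
        { intros s Xs Hs. specialize (HP s n Xs Xn Hs). unfold r'.
          apply Rmult_le_reg_l with A; [lra|].
          replace (A * (INR (S n) * (1 - / A))) with (A*INR (S n) - INR (S n)) by (field; lra).
          lra. }
        assert (H1s : 1 <= INR (S s0)) by (rewrite S_INR; pose proof (pos_INR s0); lra).
        assert (H1r' : 1 <= r') by (specialize (Hr' s0 Xs0 Hs0); lra).
        specialize (IH r' H1r' Hr').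
        assert (HSn : 0 < INR (S n)) by (rewrite S_INR; pose proof (pos_INR n); lra).
        assert (Hpos : 0 < 1 - / A).
        { destruct (Rle_lt_dec (1 - / A) 0) as [Hl|Hl]; auto. exfalso.
          assert (r' <= 0); [unfold r'; nra |]; lra. }
        assert (Hlnr' : ln r' = ln (INR (S n)) + ln (1 - / A)) by (unfold r'; apply ln_mult; lra).
        assert (Hl1 : ln (1 - / A) < - / A).
        { rewrite <- (ln_exp (- / A)). apply ln_increasing; [lra|].
          pose proof (exp_ineq1 (- / A)).
          assert (0 < / A) by (apply Rinv_0_lt_compat; lra). lra. }
        assert (Hl2 : A * ln (1 - / A) <= -1).
        { assert (A * ln (1 - / A) <= A * (- / A)) by (apply Rmult_le_compat_l; lra).
          replace (A * - / A) with (-1) in H1 by (field; lra). lra. }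
        assert (Hl3 : A * ln (INR (S n)) <= A * ln r).
        { apply Rmult_le_compat_l; [lra|]. apply myln_le; [lra|]. apply Hb; auto. }
        rewrite Hlnr', Rmult_plus_distr_l in IH. lra.
      * rewrite card_zero; [simpl; lra|]. intros s Hs Hl; apply Hno; eauto.
    + rewrite pbool_false by auto. rewrite Nat.add_0_r. apply IH; auto.
Qed.

Lemma part1_aux {Sigma} (w : nat -> Sigma) j : forall e k,
  (forall t, greedy_stage w k t -> (t < j)%nat) ->
  (forall i, (i + e < S j)%nat -> ~ bad w (greedy_stage w k) i) ->
  exists k', (forall t, greedy_stage w k' t -> (t < S j)%nat) /\
             ~ bad w (greedy_stage w k') j.
Proof.
  induction e as [|e IH]; intros k Hsub Hnb.
  - exists k. split; [intros t Ht; specialize (Hsub t Ht); lia|]. apply Hnb. lia.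
  - destruct (classic (bad w (greedy_stage w k) j)) as [Hbj|Hbj].
    2:{ exists k; split; [intros t Ht; specialize (Hsub t Ht); lia| exact Hbj]. }
    assert (Hex : exists j0, bad w (greedy_stage w k) j0) by eauto.
    destruct (least_bad_spec w _ Hex) as [Hb Hmin].
    remember (least_bad w (greedy_stage w k)) as b eqn:Hbdef.
    assert (Hbj' : (b <= j)%nat).
    { destruct (Nat.le_gt_cases b j); auto. exfalso. apply (Hmin j); auto. }
    assert (Hbe : (j <= b + e)%nat).
    { destruct (Nat.le_gt_cases j (b+e)); auto. exfalso. apply (Hnb b); [lia|exact Hb]. }
    assert (Hnew : forall i, (i <= b)%nat -> ~ bad w (greedy_stage w (S k)) i).
    { apply add_least with (T := greedy_stage w k); auto.
      - intros x Hx; apply stage_succ; left; exact Hx.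
      - apply stage_succ; right; split; auto. }
    assert (Hsub' : forall t, greedy_stage w (S k) t -> (t <= b)%nat \/ (t < j)%nat).
    { intros t Ht. apply stage_succ in Ht. destruct Ht as [Ht|[_ Ht]].
      - right; auto.
      - left; rewrite <- Hbdef in Ht; lia. }
    destruct (Nat.eq_dec b j) as [Heq|Hne].
    + exists (S k). split.
      * intros t Ht. destruct (Hsub' t Ht); lia.
      * apply Hnew. lia.
    + apply (IH (S k)).
      * intros t Ht. destruct (Hsub' t Ht); lia.
      * intros i Hi. apply Hnew. lia.
Qed.

Lemma part1 {Sigma} (w : nat -> Sigma) n :
  string_attractor w (fun x => greedy_attractor w x /\ (x < n)%nat) n.
Proof.
  destruct n as [|j].
  - intros p q _ Hq; lia.
  - destruct (part1_aux w j (S j) 0) as [k [Hsub Hnb]].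
    + intros t Ht; simpl in Ht; contradiction.
    + intros i Hi; lia.
    + unfold bad in Hnb. apply NNPP in Hnb. eapply sa_mono; [|exact Hnb].
      intros t Ht. split; [exists k; exact Ht| apply Hsub; exact Ht].
Qed.

Theorem theorem21 :
  exists K : R,
    forall (Sigma : Type) (w : nat -> Sigma) (A : R),
      finite_alphabet Sigma ->
      appearance_constant w A ->
      forall n : nat,
        string_attractor w (fun x => greedy_attractor w x /\ (x < n)%nat) n /\
        ((2 <= n)%nat ->
          INR (card_below (greedy_attractor w) n) <= K * A * ln (INR n)).
Proof.
  exists 3. intros Sigma w A _ [HA _] n. split; [apply part1|].
  intros Hn. pose proof (A_ge1 w A HA) as HA1.
  assert (H2 : 2 <= INR n) by (replace 2 with (INR 2) by (simpl; lra); apply le_INR; lia).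
  assert (Hc := count_bound (greedy_attractor w) A HA1 (gap_prop w A HA) n (INR n)
     ltac:(lra)).
  assert (Hc' : INR (card_below (greedy_attractor w) n) <= 1 + A * ln (INR n)).
  { apply Hc. intros s _ Hs. apply le_INR. lia. }
  assert (Hln : ln 2 <= ln (INR n)) by (apply myln_le; lra).
  pose proof ln_lt_2.
  assert (A * / 2 <= A * ln (INR n)) by (apply Rmult_le_compat_l; lra).
  lra.
Qed.
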